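(* Let $h(x,y)=(y,\,p(y)-\delta x)$ be a normal generalized H\'enon transformation, $\delta\ne0$. Then $h$ is reversible by an involution in $\mathcal G$ (i.e. $h^{-1}=RhR$ for some involution $R\in\mathcal G$) if and only if either $\delta=1$, or $\delta=-1$ and $p$ is an even polynomial.
   Context: $\mathcal G$ is the group of polynomial automorphisms of $\mathbb C^2$. A generalized H\'enon transformation is $h(x,y)=(y,p(y)-\delta x)$ with $\delta\ne0$ and $p$ a polynomial of degree $l\ge2$; it is normal if $p(y)=y^l+O(y^{l-2})$ (monic with vanishing coefficient of $y^{l-1}$). *)

(* Defs.v *)
(* C = R[i] for R : realType (the complex numbers). *)
From HB Require Import structures.
From mathcomp Require Import all_boot all_order all_algebra.
From mathcomp Require Import complex.
From mathcomp Require Import reals.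
Set Implicit Arguments. Unset Strict Implicit. Unset Printing Implicit Defensive.
Import Order.TTheory GRing.Theory Num.Theory.
Local Open Scope ring_scope.

Section Defs.
Variable K : comNzRingType.

Definition poly_map (F : K * K -> K * K) : Prop :=
  exists P Q : {poly {poly K}},
    forall x y : K, F (x, y) = (P.[x%:P].[y], Q.[x%:P].[y]).

Definition poly_aut (F : K * K -> K * K) : Prop :=
  poly_map F /\ exists G, poly_map G /\ cancel F G /\ cancel G F.

Definition henon (p : {poly K}) (delta : K) (z : K * K) : K * K :=
  (z.2, p.[z.2] - delta * z.1).

(* Normal: p(y) = y^l + O(y^(l-2)), l = deg p >= 2. *)
Definition normal_henon_poly (p : {poly K}) : Prop :=
  (2 < size p)%N /\ p \is monic /\ p`_(size p).-2 = 0.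

Definition is_even_poly (p : {poly K}) : Prop := forall y : K, p.[- y] = p.[y].

Definition reversible_by_involution (h : K * K -> K * K) : Prop :=
  exists R : K * K -> K * K,
    poly_aut R /\ (forall z, R (R z) = z) /\
    (forall z, h (R (h (R z))) = z) /\ (forall z, R (h (R (h z))) = z).
End Defs.

(* Main.v *)
Require Import Defs.
From HB Require Import structures.
From mathcomp Require Import all_boot all_order all_algebra.
From mathcomp Require Import complex.
From mathcomp Require Import reals.
From Stdlib Require Import Classical.
From mathcomp Require Import zify ring lra.
Import Order.TTheory GRing.Theory Num.Theory.
Local Open Scope ring_scope.

Section Gen.
Set Implicit Arguments. Unset Strict Implicit.
Variable F : numFieldType.
Implicit Types (Q : {poly {poly F}}) (u v : {poly F}).

Definition ev2 Q (x y : F) := Q.[x%:P].[y].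

Lemma ev2E Q x y : ev2 Q x y =
  \sum_(i < size Q) \sum_(j < size Q`_i) Q`_i`_j * x ^+ i * y ^+ j.
Proof.
rewrite /ev2 {1}(horner_coef Q) horner_sum; apply: eq_bigr => i _.
rewrite -rmorphXn hornerM hornerC (horner_coef Q`_i) mulr_suml.
by apply: eq_bigr => j _; rewrite mulrAC.
Qed.

Definition restr Q u v : {poly F} :=
  \sum_(i < size Q) \sum_(j < size Q`_i) (Q`_i`_j)%:P * u ^+ i * v ^+ j.

Lemma horner_restr Q u v t : (restr Q u v).[t] = ev2 Q u.[t] v.[t].
Proof.
rewrite ev2E /restr horner_sum; apply: eq_bigr => i _.
rewrite horner_sum; apply: eq_bigr => j _.
by rewrite !hornerM hornerC !horner_exp.
Qed.

Definition comp2 Q (U V : {poly {poly F}}) : {poly {poly F}} :=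
  \sum_(i < size Q) \sum_(j < size Q`_i) (Q`_i`_j)%:P%:P * U ^+ i * V ^+ j.

Lemma ev2_comp2 Q U V x y : ev2 (comp2 Q U V) x y = ev2 Q (ev2 U x y) (ev2 V x y).
Proof.
rewrite [RHS]ev2E /comp2 /ev2 horner_sum horner_sum; apply: eq_bigr => i _.
rewrite horner_sum horner_sum; apply: eq_bigr => j _.
by rewrite !hornerM !hornerC !horner_exp.
Qed.



Lemma poly_inf_eq (p q : {poly F}) : (forall t, p.[t] = q.[t]) -> p = q.
Proof.
move=> H; apply/eqP; rewrite -subr_eq0; apply/negPn/negP => nz.
set k := size (p - q).
suff: (k < k)%N by rewrite ltnn.
have := max_poly_roots nz (rs := [seq i%:R | i <- iota 0 k]).
rewrite size_map size_iota; apply.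
  by apply/allP => x /mapP [i _ ->]; rewrite /root hornerD hornerN H subrr.
rewrite map_inj_uniq ?iota_uniq // => i j /eqP; by rewrite eqr_nat => /eqP.
Qed.

Lemma exists_nonroot (T : {poly F}) : T != 0 -> exists b, T.[b] != 0.
Proof.
move=> nz; apply: (not_all_not_ex _ (fun b => T.[b] != 0)) => H; move/eqP: nz; apply.
by apply: poly_inf_eq => t; rewrite horner0; apply/eqP/negPn/negP; apply: H.
Qed.

Lemma coefM_top (p q : {poly F}) dp dq : (size p <= dp.+1)%N -> (size q <= dq.+1)%N ->
  (p * q)`_(dp + dq) = p`_dp * q`_dq.
Proof.
move=> sp sq; rewrite coefM (bigD1 (Ordinal (ltn_addr dq (ltnSn dp)))) //=.
rewrite addKn big1 ?addr0 // => i /eqP ne.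
have [lt|ge] := ltnP i dp.
  have -> : q`_(dp + dq - i) = 0.
    by apply: (leq_sizeP _ _ sq); lia.
  by rewrite mulr0.
have -> : p`_i = 0.
  apply: (leq_sizeP _ _ sp); rewrite ltn_neqAle ge andbT.
  by apply/eqP => E; apply: ne; apply: val_inj.
by rewrite mul0r.
Qed.

Lemma pow_top (u : {poly F}) du i : (size u <= du.+1)%N ->
  (size (u ^+ i) <= (i * du).+1)%N /\ (u ^+ i)`_(i * du) = u`_du ^+ i.
Proof.
move=> su; elim: i => [|i [IHs IHc]].
  by rewrite !expr0 size_poly1 coef1.
rewrite exprS; split.
  apply: leq_trans (size_polyMleq _ _) _.
  by move: su IHs; rewrite mulSn; lia.
by rewrite mulSn coefM_top // IHc exprS.
Qed.

Lemma term_top (c : F) (u v : {poly F}) du dv (i j : nat) : (size u <= du.+1)%N -> (size v <= dv.+1)%N ->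
  (size (c%:P * u ^+ i * v ^+ j)%R <= (i * du + j * dv).+1)%N /\
  (c%:P * u ^+ i * v ^+ j)`_(i * du + j * dv) = c * u`_du ^+ i * v`_dv ^+ j.
Proof.
move=> su sv; have [s1 c1] := pow_top i su; have [s2 c2] := pow_top j sv.
split.
  apply: leq_trans (size_polyMleq _ _) _.
  have := size_polyMleq c%:P (u ^+ i); have := size_polyC_leq1 c.
  by move: s1 s2; lia.
rewrite -mulrA coefCM coefM_top // c1 c2 mulrA //.
Qed.

Lemma restr_size Q u v du dv w : (size u <= du.+1)%N -> (size v <= dv.+1)%N ->
  (forall i j, Q`_i`_j != 0 -> (i * du + j * dv <= w)%N) ->
  (size (restr Q u v) <= w.+1)%N.
Proof.
move=> su sv H; apply/leq_sizeP => k Hk; rewrite /restr coef_sum big1 // => i _.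
rewrite coef_sum big1 // => j _.
case: (eqVneq Q`_i`_j 0) => [->|nz]; first by rewrite polyC0 !mul0r coef0.
have [s _] := term_top Q`_i`_j i j su sv.
apply: (leq_sizeP _ _ s); have := H _ _ nz; lia.
Qed.

Lemma restr_coef Q u v du dv w : (size u <= du.+1)%N -> (size v <= dv.+1)%N ->
  (forall i j, Q`_i`_j != 0 -> (i * du + j * dv <= w)%N) ->
  (restr Q u v)`_w = \sum_(i < size Q) \sum_(j < size Q`_i)
     (if (i * du + j * dv == w)%N then Q`_i`_j * u`_du ^+ i * v`_dv ^+ j else 0).
Proof.
move=> su sv H; rewrite /restr coef_sum; apply: eq_bigr => i _.
rewrite coef_sum; apply: eq_bigr => j _.
case: (eqVneq Q`_i`_j 0) => [->|nz].
  by rewrite polyC0 !mul0r coef0; case: ifP.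
have [s c] := term_top Q`_i`_j i j su sv.
case: eqP => [<-|ne] //.
apply: (leq_sizeP _ _ s); have := H _ _ nz; lia.
Qed.

Lemma sum_single n (G : nat -> F) k : (forall j, (n <= j)%N -> G j = 0) ->
  \sum_(j < n) (if nat_of_ord j == k then G j else 0) = G k.
Proof.
move=> H; rewrite -big_mkcond /= big_ord1_eq; case: ifP => // /negbT.
by rewrite -leqNgt => /H ->.
Qed.

Lemma restr_coef1 Q u v du dv i0 j0 : (size u <= du.+1)%N -> (size v <= dv.+1)%N ->
  (forall i j, Q`_i`_j != 0 -> (i != i0) || (j != j0) ->
      (i * du + j * dv < i0 * du + j0 * dv)%N) ->
  (size (restr Q u v) <= (i0 * du + j0 * dv).+1)%N /\
  (restr Q u v)`_(i0 * du + j0 * dv) = Q`_i0`_j0 * u`_du ^+ i0 * v`_dv ^+ j0.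
Proof.
move=> su sv H.
have Hw : forall i j, Q`_i`_j != 0 -> (i * du + j * dv <= i0 * du + j0 * dv)%N.
  move=> i j nz; case: (boolP ((i != i0) || (j != j0))) => [/(H _ _ nz)/ltnW //|].
  by rewrite negb_or !negbK => /andP [/eqP -> /eqP ->].
split; first exact: restr_size su sv Hw.
rewrite (restr_coef su sv Hw).
set X := fun i j => Q`_i`_j * u`_du ^+ i * v`_dv ^+ j.
transitivity (\sum_(i < size Q) (if nat_of_ord i == i0 then X i j0 else 0)).
  apply: eq_bigr => i _.
  transitivity (\sum_(j < size Q`_i) (if nat_of_ord j == j0 then
                  (if nat_of_ord i == i0 then X i j else 0) else 0)).
    apply: eq_bigr => j _.
    case: (eqVneq Q`_i`_j 0) => [z|nz].
      by rewrite /X z !mul0r; case: ifP; case: ifP => //; case: ifP.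
    case: (eqVneq (nat_of_ord i) i0) => [ei|ni]; case: (eqVneq (nat_of_ord j) j0) => [ej|nj].
    - have -> : (i * du + j * dv == i0 * du + j0 * dv)%N by apply/eqP; rewrite -ei -ej.
      by [].
    - have := H _ _ nz; rewrite nj orbT => /(_ isT) lt.
      by rewrite (ltn_eqF lt).
    - have := H _ _ nz; rewrite ni /= => /(_ isT) lt.
      by rewrite (ltn_eqF lt).
    - have := H _ _ nz; rewrite ni /= => /(_ isT) lt.
      by rewrite (ltn_eqF lt).
  rewrite (sum_single (G := fun j => if nat_of_ord i == i0 then X i j else 0)) //.
  by move=> j Hj; case: ifP => //; rewrite /X (nth_default _ Hj) !mul0r.
rewrite (sum_single (G := fun i => X i j0)) //.
by move=> i Hi; rewrite /X (nth_default _ Hi) coef0 !mul0r.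
Qed.

Definition TopDeg Q n := (forall i j, Q`_i`_j != 0 -> (i + j <= n)%N) /\
  exists i j, Q`_i`_j != 0 /\ (i + j = n)%N.

Lemma max_exists (P : nat -> Prop) B : (exists n, P n) -> (forall n, P n -> (n <= B)%N) ->
  exists n, P n /\ forall m, P m -> (m <= n)%N.
Proof.
elim: B => [|B IH] ex bnd.
  case: ex => n Pn; exists n; split => // m Pm.
  by have := bnd _ Pm; have := bnd _ Pn; lia.
case: (classic (P B.+1)) => [PB|nPB]; first by exists B.+1.
apply: IH => // n Pn; have := bnd _ Pn; rewrite leq_eqVlt => /orP [/eqP E|//].
by move: Pn; rewrite E.
Qed.

Lemma TopDeg_exists Q : Q != 0 -> exists n, TopDeg Q n.
Proof.
move=> nz.
pose sz := fun k : 'I_(size Q) => size (Q`_k).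
pose B := (size Q + \max_(k < size Q) sz k)%N.
pose P := fun n => exists i j, Q`_i`_j != 0 /\ (i + j = n)%N.
have ex : exists n, P n.
  exists ((size Q).-1 + (size (Q`_(size Q).-1)%R).-1)%N.
  exists (size Q).-1, (size Q`_(size Q).-1).-1; split => //.
  have := lead_coef_eq0 Q; rewrite /lead_coef (negbTE nz) => /negbT lnz.
  by have := lead_coef_eq0 (Q`_(size Q).-1); rewrite /lead_coef (negbTE lnz) => /negbT.
have bnd : forall m, P m -> (m <= B)%N.
  move=> m [i' [j' [nz' <-]]].
  have hi : (i' < size Q)%N.
    rewrite ltnNge; apply/negP => /(nth_default 0) E'; by rewrite E' coef0 eqxx in nz'.
  have hj : (j' < size (Q`_i')%R)%N.
    rewrite ltnNge; apply/negP => /(nth_default 0) E'; by rewrite E' eqxx in nz'.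
  have := @leq_bigmax _ sz (Ordinal hi); rewrite /B /sz /=.
  move=> Hm; apply: leq_add; [exact: ltnW | exact: ltnW (leq_trans hj Hm)].
have [n [Pn Hmax]] := max_exists ex bnd.
exists n; split => //.
by move=> i' j' nz'; apply: Hmax; exists i', j'.
Qed.

Lemma sum_trunc (G : nat -> F) n : (forall i, (n <= i)%N -> G i = 0) ->
  forall m, (n <= m)%N -> \sum_(i < m) G i = \sum_(i < n) G i.
Proof.
move=> H; elim=> [|m IH]; first by rewrite leqn0 => /eqP ->.
rewrite leq_eqVlt => /orP [/eqP -> //|lt].
by rewrite big_ord_recr /= H ?addr0 ?IH.
Qed.

Lemma exact_line Q n : TopDeg Q n -> exists b,
  (size (restr Q (b *: 'X) 'X) <= n.+1)%N /\ (restr Q (b *: 'X) 'X)`_n != 0.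
Proof.
move=> [Hle [i0 [j0 [nz0 E0]]]].
pose T : {poly F} := \poly_(i < n.+1) Q`_i`_(n - i).
have Tnz : T != 0.
  apply/negP => /eqP T0; move/eqP: nz0; apply.
  have : T`_i0 = 0 by rewrite T0 coef0.
  by rewrite coef_poly ifT -?E0 ?addKn //; lia.
have [b Tb] := exists_nonroot Tnz; exists b.
have su : (size (b *: 'X : {poly F}) <= 1.+1)%N.
  by apply: leq_trans (size_scale_leq _ _) _; rewrite size_polyX.
have sv : (size ('X : {poly F}) <= 1.+1)%N by rewrite size_polyX.
have Hw : forall i j, Q`_i`_j != 0 -> (i * 1 + j * 1 <= n)%N.
  by move=> i j /Hle; rewrite !muln1.
split; first exact: restr_size su sv Hw.
rewrite (restr_coef su sv Hw).
have -> : (b *: ('X : {poly F}))`_1 = b by rewrite coefZ coefX eqxx mulr1.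
have -> : ('X : {poly F})`_1 = 1 by rewrite coefX eqxx.
under eq_bigr => i _ do under eq_bigr => j _ do rewrite expr1n.
pose H i := if (i <= n)%N then Q`_i`_(n - i) * b ^+ i else 0.
have -> : \sum_(i < size Q) \sum_(j < size Q`_i)
   (if (i * 1 + j * 1 == n)%N then Q`_i`_j * b ^+ i * 1 else 0) = \sum_(i < size Q) H i.
  apply: eq_bigr => i _.
  transitivity (\sum_(j < size Q`_i) (if nat_of_ord j == (n - i)%N then
      (if (i <= n)%N then Q`_i`_j * b ^+ i else 0) else 0)).
    apply: eq_bigr => j _; rewrite !muln1 mulr1.
    case: (eqVneq (nat_of_ord j) (n - i)%N) => [ej|nj].
      case: ifP => hi; first by rewrite ifT //; apply/eqP; lia.
      by rewrite ifF //; apply/eqP; lia.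
    by rewrite ifF //; apply/eqP; move: nj => /eqP; lia.
  rewrite (sum_single (G := fun j => if (i <= n)%N then Q`_i`_j * b ^+ i else 0)) //.
  by move=> j Hj; case: ifP => //; rewrite (nth_default _ Hj) mul0r.
have HQ : forall i, (size Q <= i)%N -> H i = 0.
  by move=> i Hi; rewrite /H (nth_default _ Hi) coef0 mul0r; case: ifP.
have Hn : forall i, (n.+1 <= i)%N -> H i = 0 by move=> i Hi; rewrite /H ifF //; lia.
rewrite -(sum_trunc HQ (leq_maxl _ n.+1)) (sum_trunc Hn (leq_maxr (size Q) _)).
move: Tb; rewrite horner_poly; congr (_ != 0); apply: eq_bigr => i _.
by rewrite /H ifT //; have := ltn_ord i; lia.
Qed.

Definition LD (f : F * F -> F) m := forall a b : F, exists q : {poly F},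
  (size q <= m.+1)%N /\ forall t, f (a * t, b * t) = q.[t].
Definition IsDeg (f : F * F -> F) n := LD f n /\ forall m, (m < n)%N -> ~ LD f m.
Definition Rep (f : F * F -> F) Q := forall x y, f (x, y) = ev2 Q x y.

Lemma LD_mono f m m' : LD f m -> (m <= m')%N -> LD f m'.
Proof.
move=> H le a b; have [q [sq Hq]] := H a b; exists q; split => //.
exact: leq_trans sq _.
Qed.

Lemma LD_ext f g m : (forall z, f z = g z) -> LD f m -> LD g m.
Proof. by move=> E H a b; have [q [sq Hq]] := H a b; exists q; split => // t; rewrite -E. Qed.

Lemma LD_lin f1 f2 c m : LD f1 m -> LD f2 m -> LD (fun z => c * f1 z + f2 z) m.
Proof.
move=> H1 H2 a b; have [q1 [s1 E1]] := H1 a b; have [q2 [s2 E2]] := H2 a b.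
exists (c *: q1 + q2); split.
  apply: leq_trans (size_polyD _ _) _; rewrite geq_max s2 andbT.
  exact: leq_trans (size_scale_leq _ _) s1.
by move=> t; rewrite hornerD hornerZ E1 E2.
Qed.

Lemma LD_rep f Q m : Rep f Q -> (forall i j, Q`_i`_j != 0 -> (i + j <= m)%N) -> LD f m.
Proof.
move=> HR H a b; exists (restr Q (a *: 'X) (b *: 'X)); split.
  have s : forall c : F, (size (c *: ('X : {poly F})) <= 1.+1)%N.
    by move=> c; apply: leq_trans (size_scale_leq _ _) _; rewrite size_polyX.
  by apply: (restr_size (s a) (s b)) => i j /H; rewrite !muln1.
by move=> t; rewrite horner_restr !hornerZ hornerX HR.
Qed.

Lemma notLD_exact f a b (r : {poly F}) n m : (forall t, f (a * t, b * t) = r.[t]) ->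
  r`_n != 0 -> (m < n)%N -> ~ LD f m.
Proof.
move=> Hr nz lt H; have [q [sq Hq]] := H a b.
have E : q = r by apply: poly_inf_eq => t; rewrite -Hq Hr.
move/eqP: nz; apply; rewrite -E; apply: (leq_sizeP _ _ sq); exact: lt.
Qed.

Lemma IsDeg_rep f Q n : Rep f Q -> TopDeg Q n -> IsDeg f n.
Proof.
move=> HR TD; split; first by apply: LD_rep HR _; case: TD.
have [b [_ nz]] := exact_line TD.
move=> m lt; apply: (notLD_exact (a := b) (b := 1) _ nz lt) => t.
by rewrite horner_restr hornerZ hornerX mul1r HR.
Qed.

Lemma IsDeg_uniq f n n' : IsDeg f n -> IsDeg f n' -> n = n'.
Proof.
move=> [L1 N1] [L2 N2]; case: (ltngtP n n') => // lt.
  by case: (N2 _ lt L1).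
by case: (N1 _ lt L2).
Qed.

Lemma LD0_const f : LD f 0 -> forall z, f z = f (0, 0).
Proof.
move=> H [x y]; have [q [sq Hq]] := H x y.
have [c Ec] : exists c, q = c%:P.
  by exists q`_0; apply: size1_polyC.
rewrite Ec in Hq.
by have := Hq 1; have := Hq 0; rewrite !mulr1 !mulr0 !hornerC => -> ->.
Qed.

Lemma Rep_deg f Q : Rep f Q -> exists n, IsDeg f n.
Proof.
move=> HR; case: (eqVneq Q 0) => [Q0|nz].
  exists 0%N; split => // a b; exists 0; split => [|t]; first by rewrite size_poly0.
  by rewrite HR /ev2 Q0 !horner0.
by have [n TD] := TopDeg_exists nz; exists n; exact: IsDeg_rep HR TD.
Qed.

Lemma Rep_TopDeg f Q n : Rep f Q -> IsDeg f n -> (0 < n)%N -> TopDeg Q n.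
Proof.
move=> HR D npos; case: (eqVneq Q 0) => [Q0|nz].
  case: D => _ /(_ 0%N npos); case => a b; exists 0; split => [|t]; first by rewrite size_poly0.
  by rewrite HR /ev2 Q0 !horner0.
have [n' TD] := TopDeg_exists nz.
by rewrite (IsDeg_uniq D (IsDeg_rep HR TD)).
Qed.

Lemma weight_lt i j n l : (i + j <= n)%N -> (2 <= l)%N -> (i != 0%N) || (j != n) ->
  (i * 1 + j * l < 0 * 1 + n * l)%N.
Proof. move=> h1 h2 /orP [/eqP h3|/eqP h3]; nia. Qed.
Lemma weight_lt2 i j n l : (i + j <= n)%N -> (2 <= l)%N -> (i != n) || (j != 0%N) ->
  (i * l + j * 1 < n * l + 0 * 1)%N.
Proof. move=> h1 h2 /orP [/eqP h3|/eqP h3]; nia. Qed.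

Section Henon.
Variables (p : {poly F}) (d : F).
Hypothesis dnz : d != 0.
Hypothesis sp : (2 < size p)%N.
Let l := (size p).-1.
Let l2 : (2 <= l)%N. Proof. by rewrite /l; move: sp; case: (size p) => //= k; lia. Qed.
Let lc_nz : p`_l != 0.
Proof.
have : p != 0 by rewrite -size_poly_eq0; move: sp; case: (size p).
by rewrite -lead_coef_eq0.
Qed.

Definition hf (z : F * F) : F * F := (z.2, p.[z.2] - d * z.1).
Definition hinv (z : F * F) : F * F := ((p.[z.1] - z.2) / d, z.1).

Lemma hinvK z : hinv (hf z) = z.
Proof. by case: z => x y; rewrite /hf /hinv /=; congr (_, _); field. Qed.
Lemma hfK z : hf (hinv z) = z.
Proof. by case: z => x y; rewrite /hf /hinv /=; congr (_, _); field. Qed.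

Definition Uh : {poly {poly F}} := 'X%:P.
Definition Vh : {poly {poly F}} := p%:P - d%:P%:P * 'X.
Definition Ui : {poly {poly F}} := (d^-1)%:P%:P * (map_poly polyC p - 'X%:P).
Definition Vi : {poly {poly F}} := 'X.

Lemma Rep_hf phi Q : Rep phi Q -> Rep (fun z => phi (hf z)) (comp2 Q Uh Vh).
Proof.
move=> H x y; rewrite ev2_comp2 /hf /= H; congr ev2.
  by rewrite /ev2 /Uh hornerC hornerX.
by rewrite /ev2 /Vh !(hornerD, hornerN, hornerM, hornerC, hornerX).
Qed.

Lemma Rep_hinv phi Q : Rep phi Q -> Rep (fun z => phi (hinv z)) (comp2 Q Ui Vi).
Proof.
move=> H x y; rewrite ev2_comp2 /hinv /= H; congr ev2.
  rewrite /ev2 /Ui !(hornerD, hornerN, hornerM, hornerC, hornerX).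
  by rewrite horner_map /= hornerC mulrC.
by rewrite /ev2 /Vi hornerX hornerC.
Qed.

Lemma size_drop (q : {poly F}) w : (size q <= w.+1)%N -> q`_w = 0 -> (size q <= w)%N.
Proof.
move=> s c; apply/leq_sizeP => j Hj; rewrite leq_eqVlt in Hj.
case/orP: Hj => [/eqP <- //|lt]; exact: (leq_sizeP _ _ s).
Qed.

Let sX (c : F) : (size (c *: ('X : {poly F})) <= 1.+1)%N.
Proof. by apply: leq_trans (size_scale_leq _ _) _; rewrite size_polyX. Qed.

Let sComp (c : F) : (size (p \Po (c *: 'X)) <= l.+1)%N.
Proof.
apply: leq_trans (size_comp_poly_leq _ _) _; rewrite ltnS /l.
have := sX c; case: (size (c *: 'X)) => [|[|[|k]]] //= _; rewrite ?muln0 ?muln1 //.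
Qed.

Let sVh (a b : F) : (size (p \Po (b *: 'X) - (d * a) *: 'X)%R <= l.+1)%N.
Proof.
apply: leq_trans (size_polyD _ _) _; rewrite size_polyN geq_max sComp /=.
by apply: leq_trans (sX _) _; rewrite ltnS; apply: leq_trans l2.
Qed.

Let sUi (a b : F) : (size (d^-1 *: (p \Po (a *: 'X) - b *: 'X))%R <= l.+1)%N.
Proof.
apply: leq_trans (size_scale_leq _ _) _.
apply: leq_trans (size_polyD _ _) _; rewrite size_polyN geq_max sComp /=.
by apply: leq_trans (sX _) _; rewrite ltnS; apply: leq_trans l2.
Qed.

Lemma LD_hf phi Q n : Rep phi Q -> TopDeg Q n ->
  LD (fun z => phi (hf z)) (l * n) /\
  (Q`_0`_n = 0 -> LD (fun z => phi (hf z)) (l * n).-1).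
Proof.
move=> HR [Hle _].
have key : forall a b, (size (restr Q (b *: 'X) (p \Po (b *: 'X) - (d * a) *: 'X)%R)
     <= (0 * 1 + n * l).+1)%N /\
   (restr Q (b *: 'X) (p \Po (b *: 'X) - (d * a) *: 'X))`_(0 * 1 + n * l) =
     Q`_0`_n * (b *: ('X : {poly F}))`_1 ^+ 0 * (p \Po (b *: 'X) - (d * a) *: 'X)`_l ^+ n.
  move=> a b; apply: (restr_coef1 (sX b) (sVh a b)).
  by move=> i j /Hle h1 h2; apply: weight_lt.
have ev : forall a b t, phi (hf (a * t, b * t)) =
   (restr Q (b *: 'X) (p \Po (b *: 'X) - (d * a) *: 'X)).[t].
  move=> a b t; rewrite horner_restr /hf /= HR.
  by rewrite hornerD hornerN !hornerZ hornerX horner_comp hornerZ hornerX mulrA.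
split.
  move=> a b; eexists; split; last by move=> t; apply: ev.
  by have [s _] := key a b; rewrite mul0n add0n mulnC in s.
move=> Q0 a b; eexists; split; last by move=> t; apply: ev.
have [s c] := key a b; rewrite Q0 !mul0r in c.
have := size_drop s c; rewrite mul0n add0n mulnC => h.
by apply: leq_trans h _; rewrite leqSpred.
Qed.

Lemma LD_hf_exact phi Q n : Rep phi Q -> TopDeg Q n -> Q`_0`_n != 0 ->
  forall m, (m < l * n)%N -> ~ LD (fun z => phi (hf z)) m.
Proof.
move=> HR [Hle _] nz m lt.
have sp' : (size p <= l.+1)%N by rewrite /l; case: (size p).
have [_ c] := restr_coef1 (Q := Q) (i0 := 0%N) (j0 := n) (sX 1) sp'
   (fun i j h1 h2 => weight_lt (Hle _ _ h1) l2 h2).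
apply: (notLD_exact (a := 0) (b := 1) (r := restr Q (1 *: 'X) p) (n := (0 * 1 + n * l)%N)).
- move=> t; rewrite horner_restr /hf /= HR hornerZ hornerX.
  by rewrite !mul1r mul0r mulr0 subr0.
- by rewrite c expr0 mulr1 mulf_neq0 // expf_neq0.
- by rewrite mul0n add0n mulnC.
Qed.

Lemma LD_hinv phi Q n : Rep phi Q -> TopDeg Q n ->
  LD (fun z => phi (hinv z)) (l * n) /\
  (Q`_n`_0 = 0 -> LD (fun z => phi (hinv z)) (l * n).-1).
Proof.
move=> HR [Hle _].
have key : forall a b, (size (restr Q (d^-1 *: (p \Po (a *: 'X) - b *: 'X))%R (a *: 'X))
     <= (n * l + 0 * 1).+1)%N /\
   (restr Q (d^-1 *: (p \Po (a *: 'X) - b *: 'X)) (a *: 'X))`_(n * l + 0 * 1) =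
     Q`_n`_0 * (d^-1 *: (p \Po (a *: 'X) - b *: 'X))`_l ^+ n * (a *: ('X : {poly F}))`_1 ^+ 0.
  move=> a b; apply: (restr_coef1 (sUi a b) (sX a)).
  by move=> i j /Hle h1 h2; apply: weight_lt2.
have ev : forall a b t, phi (hinv (a * t, b * t)) =
   (restr Q (d^-1 *: (p \Po (a *: 'X) - b *: 'X)) (a *: 'X)).[t].
  move=> a b t; rewrite horner_restr /hinv /= HR.
  by rewrite !hornerZ hornerD hornerN hornerZ horner_comp !hornerZ !hornerX mulrC.
split.
  move=> a b; eexists; split; last by move=> t; apply: ev.
  by have [s _] := key a b; rewrite mul0n addn0 mulnC in s.
move=> Q0 a b; eexists; split; last by move=> t; apply: ev.
have [s c] := key a b; rewrite Q0 !mul0r in c.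
have := size_drop s c; rewrite mul0n addn0 mulnC => h.
by apply: leq_trans h _; rewrite leqSpred.
Qed.

Lemma LD_hinv_exact phi Q n : Rep phi Q -> TopDeg Q n -> Q`_n`_0 != 0 ->
  forall m, (m < l * n)%N -> ~ LD (fun z => phi (hinv z)) m.
Proof.
move=> HR [Hle _] nz m lt.
have sp' : (size (d^-1 *: p)%R <= l.+1)%N.
  by apply: leq_trans (size_scale_leq _ _) _; rewrite /l; case: (size p).
have [_ c] := restr_coef1 (Q := Q) (i0 := n) (j0 := 0%N) sp' (sX 1)
   (fun i j h1 h2 => weight_lt2 (Hle _ _ h1) l2 h2).
apply: (notLD_exact (a := 1) (b := 0) (r := restr Q (d^-1 *: p) (1 *: 'X)) (n := (n * l + 0 * 1)%N)).
- move=> t; rewrite horner_restr /hinv /= HR !hornerZ hornerX.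
  by rewrite !mul1r mul0r subr0 mulrC.
- by rewrite c expr0 mulr1 coefZ mulf_neq0 // expf_neq0 // mulf_neq0 // invr_neq0.
- by rewrite mul0n addn0 mulnC.
Qed.

Lemma p_comp_exact phi Q n : Rep phi Q -> TopDeg Q n -> (0 < n)%N ->
  forall m, (m < l * n)%N -> ~ LD (fun z => p.[phi z]) m.
Proof.
move=> HR TD npos m lt.
have [b [s c]] := exact_line TD.
set r := restr Q (b *: 'X) 'X in s c.
have sr : size r = n.+1.
  apply/eqP; rewrite eqn_leq s /=; rewrite ltnNge; apply/negP => h.
  by move/eqP: c; apply; apply: (leq_sizeP _ _ h).
have sP : (size (p \Po r)).-1 = (l * n)%N by rewrite size_comp_poly sr.
have Pnz : p \Po r != 0.
  apply/negP => /eqP P0; move: sP; rewrite P0 size_poly0 /=.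
  by move=> h; have := l2; have := npos; nia.
apply: (notLD_exact (a := b) (b := 1) (r := p \Po r) (n := (l * n)%N)) => //.
  move=> t; rewrite horner_comp /r horner_restr hornerZ hornerX mul1r HR.
  by [].
by rewrite -sP -lead_coefE lead_coef_eq0.
Qed.

Lemma IsDeg_ext f g n : (forall z, f z = g z) -> IsDeg f n -> IsDeg g n.
Proof.
move=> E [L N]; split; first exact: LD_ext E L.
by move=> m lt Lg; apply: (N m lt); apply: LD_ext Lg => z; rewrite E.
Qed.

Definition Rev (G : F * F -> F * F) :=
  [/\ forall z, G (G z) = z, forall z, G (hf z) = hinv (G z),
      exists Q, Rep (fun z => (G z).1) Q & exists Q, Rep (fun z => (G z).2) Q].

Lemma Rev_hf G : Rev G -> Rev (fun z => G (hf z)).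
Proof.
case=> inv rev [Q1 R1] [Q2 R2]; split.
- by move=> z; rewrite rev inv hinvK.
- by move=> z; rewrite rev.
- by exists (comp2 Q1 Uh Vh); apply: (Rep_hf (phi := fun z => (G z).1)).
- by exists (comp2 Q2 Uh Vh); apply: (Rep_hf (phi := fun z => (G z).2)).
Qed.

Lemma Rev_hf_inv G : Rev G -> forall z, G (hinv z) = hf (G z).
Proof. by case=> inv rev _ _ z; rewrite -{2}(hfK z) rev hfK. Qed.

Lemma Rev_hinv G : Rev G -> Rev (fun z => G (hinv z)).
Proof.
move=> RG; have E := Rev_hf_inv RG; case: RG => inv rev [Q1 R1] [Q2 R2]; split.
- by move=> z; rewrite (E (G (hinv z))) inv hfK.
- by move=> z; rewrite hinvK (E z) hinvK.
- by exists (comp2 Q1 Ui Vi); apply: (Rep_hinv (phi := fun z => (G z).1)).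
- by exists (comp2 Q2 Ui Vi); apply: (Rep_hinv (phi := fun z => (G z).2)).
Qed.

Lemma Rev_rel G : Rev G ->
  [/\ forall z, (G z).2 = (G (hinv z)).1,
      forall z, p.[(G z).1] = d * (G (hf z)).1 + (G z).2 &
      forall z, p.[(G z).2] = d * (G z).1 + (G (hinv z)).2].
Proof.
move=> RG; have E := Rev_hf_inv RG; case: RG => inv rev _ _.
have r2 : forall z, p.[(G z).1] = d * (G (hf z)).1 + (G z).2.
  by move=> z; rewrite rev /hinv /=; field.
have e1 : forall z, (G z).2 = (G (hinv z)).1 by move=> z; rewrite E.
split => // z.
by rewrite {1}e1 r2 hfK.
Qed.

Lemma wA i j n e : (i + j <= n)%N -> (n < e)%N -> (i != 0%N) || (j != n) ->
  (i * n + j * e < 0 * n + n * e)%N.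
Proof. move=> h1 h2 /orP [/eqP h3|/eqP h3]; nia. Qed.
Lemma wB i j n e : (i + j <= e)%N -> (e < n)%N -> (i != e) || (j != 0%N) ->
  (i * n + j * e < e * n + 0 * e)%N.
Proof. move=> h1 h2 /orP [/eqP h3|/eqP h3]; nia. Qed.
Lemma wC i j n : (i + j <= n)%N -> (2 <= n)%N -> (i != 0%N) || (j != n) ->
  (i * n.-1 + j * n < 0 * n.-1 + n * n)%N.
Proof. move=> h1 h2 /orP [/eqP h3|/eqP h3]; nia. Qed.

Lemma deg_le f d1 m : IsDeg f d1 -> LD f m -> (d1 <= m)%N.
Proof. by move=> [_ N] L; rewrite leqNgt; apply/negP => lt; apply: (N m lt L). Qed.

Lemma coefZX_big (b : F) k : (2 <= k)%N -> (b *: ('X : {poly F}))`_k = 0.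
Proof. by move=> h; rewrite coefZ coefX; case: eqP => [E|_]; [move: h; rewrite E | rewrite mulr0]. Qed.

Lemma restr_size1 Q (b : F) n : (forall i j, Q`_i`_j != 0 -> (i + j <= n)%N) ->
  (size (restr Q (b *: 'X) 'X) <= n.+1)%N.
Proof.
move=> H; apply: (restr_size (sX b) (_ : size ('X : {poly F}) <= 1.+1)%N).
  by rewrite size_polyX.
by move=> i j /H; rewrite !muln1.
Qed.

Lemma minimal_deg G n e : Rev G -> IsDeg (fun z => (G z).1) n -> IsDeg (fun z => (G z).2) e ->
  (forall G' n' e', Rev G' -> IsDeg (fun z => (G' z).1) n' -> IsDeg (fun z => (G' z).2) e' ->
     (n + e <= n' + e')%N) ->
  n = 1%N /\ e = 1%N.
Proof.
move=> RG Df Dg Hmin.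
have [inv rev [Qf Rf] [Qg Rg]] := RG.
have [rel1 rel2 rel3] := Rev_rel RG.
have GG1 : forall w, ev2 Qf (G w).1 (G w).2 = w.1.
  by move=> w; rewrite -Rf -surjective_pairing inv.
have GG2 : forall w, ev2 Qg (G w).1 (G w).2 = w.2.
  by move=> w; rewrite -Rg -surjective_pairing inv.
have npos : (0 < n)%N.
  rewrite lt0n; apply/negP => /eqP n0; case: Df => L _; rewrite n0 in L.
  have C := LD0_const L.
  have := C (G (1, 0)); have := C (G (0, 0)); rewrite !inv /= => h0 h1.
  by move: h1; rewrite -h0 => /eqP; rewrite oner_eq0.
have epos : (0 < e)%N.
  rewrite lt0n; apply/negP => /eqP e0; case: Dg => L _; rewrite e0 in L.
  have C := LD0_const L.
  have := C (G (0, 1)); have := C (G (0, 0)); rewrite !inv /= => h0 h1.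
  by move: h1; rewrite -h0 => /eqP; rewrite oner_eq0.
have TDf := Rep_TopDeg Rf Df npos.
have TDg := Rep_TopDeg Rg Dg epos.
have lnpos : forall k, (0 < k)%N -> (0 < l * k)%N by move=> k kp; rewrite muln_gt0 kp andbT; apply: leq_trans l2.
have C1 : Qf`_0`_n != 0.
  apply/negP => /eqP Q0.
  have [_ L] := LD_hf Rf TDf; have L1 := L Q0.
  have [d1 D1] := Rep_deg (Rep_hf Rf).
  have D2 : IsDeg (fun z => (G (hf z)).2) n.
    by apply: IsDeg_ext Df => z; rewrite rev.
  have H1 := Hmin _ _ _ (Rev_hf RG) D1 D2.
  have H2 := deg_le D1 L1.
  have Lg : LD (fun z => (G z).2) (l * n).-1.
    by apply: LD_mono (proj1 Dg) _; move: H1 H2; lia.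
  have Lp : LD (fun z => p.[(G z).1]) (l * n).-1.
    by apply: LD_ext (LD_lin d L1 Lg) => z; rewrite rel2.
  by apply: (p_comp_exact Rf TDf npos _ Lp); rewrite prednK ?lnpos.
have C2 : Qg`_e`_0 != 0.
  apply/negP => /eqP Q0.
  have [_ L] := LD_hinv Rg TDg; have L1 := L Q0.
  have [d2 D1] := Rep_deg (Rep_hinv Rg).
  have D2 : IsDeg (fun z => (G (hinv z)).1) e.
    by apply: IsDeg_ext Dg => z; rewrite rel1.
  have H1 := Hmin _ _ _ (Rev_hinv RG) D2 D1.
  have H2 := deg_le D1 L1.
  have Lf : LD (fun z => (G z).1) (l * e).-1.
    by apply: LD_mono (proj1 Df) _; move: H1 H2; lia.
  have Lp : LD (fun z => p.[(G z).2]) (l * e).-1.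
    by apply: LD_ext (LD_lin d Lf L1) => z; rewrite rel3.
  by apply: (p_comp_exact Rg TDg epos _ Lp); rewrite prednK ?lnpos.
have Hf := proj1 TDf; have Hg := proj1 TDg.
have sX1 : (size ('X : {poly F}) <= 1.+1)%N by rewrite size_polyX.
case: (ltngtP n e) => [lt|gt|eq].
- have [b [s c]] := exact_line TDg.
  set rg := restr Qg (b *: 'X) 'X in s c.
  have su := restr_size1 b Hf.
  set u := restr Qf (b *: 'X) 'X in su.
  have [_ cW] := restr_coef1 (Q := Qf) (i0 := 0%N) (j0 := n) su s
    (fun i j h1 h2 => wA (Hf _ _ h1) lt h2).
  have EW : restr Qf u rg = b *: 'X.
    apply: poly_inf_eq => t; rewrite horner_restr /u /rg !horner_restr !hornerZ hornerX.
    by rewrite -(Rf (b * t) t) -(Rg (b * t) t) GG1.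
  move: cW; rewrite EW coefZX_big; last by move: lt npos; nia.
  move/eqP; rewrite eq_sym expr0 mulr1 mulf_eq0 (negbTE C1) /= expf_eq0 (negbTE c).
  by rewrite andbF.
- have [b [s c]] := exact_line TDf.
  set rf := restr Qf (b *: 'X) 'X in s c.
  have sv := restr_size1 b Hg.
  set v := restr Qg (b *: 'X) 'X in sv.
  have [_ cW] := restr_coef1 (Q := Qg) (i0 := e) (j0 := 0%N) s sv
    (fun i j h1 h2 => wB (Hg _ _ h1) gt h2).
  have EW : restr Qg rf v = 'X.
    apply: poly_inf_eq => t; rewrite horner_restr /v /rf !horner_restr !hornerZ hornerX.
    by rewrite -(Rf (b * t) t) -(Rg (b * t) t) GG2.
  move: cW; rewrite EW coefX (_ : (e * n + 0 * e == 1)%N = false) /=; last first.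
    by apply/eqP; move: gt epos; nia.
  move/eqP; rewrite eq_sym expr0 mulr1 mulf_eq0 (negbTE C2) /= expf_eq0 (negbTE c).
  by rewrite andbF.
- subst e.
  case: (eqVneq n 1%N) => [n1|n1]; first by split.
  have n2 : (2 <= n)%N by move: npos n1; clear; case: n => [|[|k]].
  have nln : (n < l * n)%N by move: n2 l2; nia.
  have Z1 : Qf`_n`_0 = 0.
    apply/eqP/negPn/negP => nz.
    apply: (LD_hinv_exact Rf TDf nz nln).
    by apply: LD_ext (proj1 Dg) => z; rewrite rel1.
  have Z2 : Qg`_0`_n = 0.
    apply/eqP/negPn/negP => nz.
    apply: (LD_hf_exact Rg TDg nz nln).
    by apply: LD_ext (proj1 Df) => z; rewrite rev.
  have s0 : (size (0 : {poly F})%R <= 0.+1)%N by rewrite size_poly0.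
  have su : (size (restr Qf 'X 0)%R <= n.-1.+1)%N.
    apply: (restr_size sX1 s0) => i j nz; rewrite muln1 muln0 addn0.
    have := Hf _ _ nz; case: (eqVneq i n) => [Ei|Ni] h.
      have j0 : j = 0%N by move: h; rewrite Ei; lia.
      by move: nz; rewrite Ei j0 Z1 eqxx.
    by move: h Ni npos; lia.
  have Wg : forall i j, Qg`_i`_j != 0 -> (i != n) || (j != 0%N) ->
      (i * 1 + j * 0 < n * 1 + 0 * 0)%N.
    move=> i j h1 h2; move: h2; have := Hg _ _ h1; case: (eqVneq i n) => [->|Ni] h /=.
      by move: h; lia.
    by move: h Ni => /= h /eqP Ni; lia.
  have [sv cv] := restr_coef1 (Q := Qg) (i0 := n) (j0 := 0%N) sX1 s0 Wg.
  rewrite muln1 muln0 addn0 in sv cv.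
  set u := restr Qf 'X 0 in su.
  set v := restr Qg 'X 0 in sv cv.
  have [_ cW] := restr_coef1 (Q := Qf) (i0 := 0%N) (j0 := n) su sv
    (fun i j h1 h2 => wC (Hf _ _ h1) n2 h2).
  have EW : restr Qf u v = 'X.
    apply: poly_inf_eq => t; rewrite horner_restr /u /v !horner_restr horner0 hornerX.
    by rewrite -(Rf t 0) -(Rg t 0) GG1.
  move: cW; rewrite EW coefX (_ : (0 * n.-1 + n * n == 1)%N = false) /=; last first.
    by apply/eqP; move: n2; nia.
  move/eqP; rewrite eq_sym expr0 mulr1 mulf_eq0 (negbTE C1) /= expf_eq0 cv.
  rewrite coefX eqxx expr1n mulr1 coef0 expr0 mulr1.
  by rewrite (negbTE C2) andbF.
Qed.

Lemma horner_size2 (q : {poly F}) y : (size q <= 2)%N -> q.[y] = q`_0 + q`_1 * y.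
Proof.
move=> s; rewrite (horner_coef_wide _ s) !big_ord_recr big_ord0 /=.
by rewrite add0r expr0 mulr1 expr1.
Qed.

Lemma sym_center c : p`_(l.-1) = 0 -> (forall y, p.[c - y] = p.[y]) -> c = 0.
Proof.
move=> pl1 H.
pose q := c%:P - ('X : {poly F}).
have E : p \Po q = p.
  by apply: poly_inf_eq => t; rewrite horner_comp /q hornerD hornerN hornerC hornerX H.
have D : forall k, (p \Po q)^`(k) = (-1) ^+ k *: (p^`(k) \Po q).
  elim=> [|k IH]; first by rewrite !derivn0 expr0 scale1r.
  rewrite derivnS IH derivZ deriv_comp /q derivB derivC derivX sub0r mulrN1.
  by rewrite derivnS exprS mulN1r scaleNr scalerN.
have := D l.-1; rewrite E => /(congr1 (fun r => r.[0])).
rewrite hornerZ horner_comp /q hornerD hornerN hornerC hornerX subr0.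
set r := p^`(l.-1).
have sr : (size r <= 2)%N.
  apply/leq_sizeP => j hj; rewrite coef_derivn nth_default ?mul0rn //.
  have El : l = (size p).-1 by []. rewrite El; move: hj sp; clear; set s := size p; move: s => s; lia.
rewrite !horner_size2 // mulr0 addr0.
have r0 : r`_0 = 0 by rewrite coef_derivn addn0 pl1 mul0rn.
rewrite r0 add0r => /eqP; rewrite eq_sym mulf_eq0 signr_eq0 /= mulf_eq0.
have -> : r`_1 == 0 = false.
  rewrite coef_derivn addn1 prednK; last by apply: leq_trans l2.
  by rewrite mulrn_eq0 (negbTE lc_nz) orbF; apply/negbTE; rewrite -lt0n ffact_gt0 leq_pred.
by move=> /eqP.
Qed.

Lemma affine_concl G : Rev G -> IsDeg (fun z => (G z).1) 1 -> IsDeg (fun z => (G z).2) 1 ->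
  d = 1 \/ (d = -1 /\ exists c, forall y, p.[c - y] = p.[y]).
Proof.
move=> RG Df Dg.
have [inv rev [Qf Rf] _] := RG.
have [rel1 rel2 _] := Rev_rel RG.
have TDf := Rep_TopDeg Rf Df (isT : (0 < 1)%N).
have Hf := proj1 TDf.
have Z : Qf`_1`_0 = 0.
  apply/eqP/negPn/negP => nz.
  apply: (LD_hinv_exact Rf TDf nz (m := 1%N)); first by rewrite muln1.
  by apply: LD_ext (proj1 Dg) => z; rewrite rel1.
have sX1 : (size ('X : {poly F}) <= 1.+1)%N by rewrite size_polyX.
have s0 : (size (0 : {poly F})%R <= 0.+1)%N by rewrite size_poly0.
set c := (G (0, 0)).1; set B := Qf`_0`_1.
have fx0 : forall x, (G (x, 0)).1 = c.
  have W : forall i j, Qf`_i`_j != 0 -> (i != 1%N) || (j != 0%N) ->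
      (i * 1 + j * 0 < 1 * 1 + 0 * 0)%N.
    move=> i j h1; have := Hf _ _ h1; case: (eqVneq i 1%N) => [->|Ni] h /=.
      by move: h; lia.
    by move: h Ni => h /eqP Ni; lia.
  have [s cf] := restr_coef1 (Q := Qf) (i0 := 1%N) (j0 := 0%N) sX1 s0 W.
  rewrite Z !mul0r in cf.
  have s1 := size_drop s cf.
  move=> x; rewrite /c !Rf.
  have ev : forall t, ev2 Qf t 0 = (restr Qf 'X 0).[t].
    by move=> t; rewrite horner_restr hornerX horner0.
  rewrite !ev; have [k Ek] : exists k, restr Qf 'X 0 = k%:P.
    by exists (restr Qf 'X 0)`_0; apply: size1_polyC.
  by rewrite Ek !hornerC.
have fx : forall x y, (G (x, y)).1 = c + B * y.
  move=> x y.
  have sC : (size x%:P <= 0.+1)%N by apply: size_polyC_leq1.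
  have W : forall i j, Qf`_i`_j != 0 -> (i != 0%N) || (j != 1%N) ->
      (i * 0 + j * 1 < 0 * 0 + 1 * 1)%N.
    move=> i j h1; have := Hf _ _ h1; case: (eqVneq j 1%N) => [->|Nj] h /=.
      by rewrite orbF => /eqP Ni; move: h Ni; lia.
    by move: h Nj => h /eqP Nj _; lia.
  have [s cf] := restr_coef1 (Q := Qf) (i0 := 0%N) (j0 := 1%N) sC sX1 W.
  rewrite Rf (_ : ev2 Qf x y = (restr Qf x%:P 'X).[y]); last first.
    by rewrite horner_restr hornerC hornerX.
  rewrite horner_size2 //; congr (_ + _).
    by rewrite -horner_coef0 horner_restr hornerC hornerX -Rf fx0.
  by rewrite cf expr0 mulr1 coefX eqxx expr1 mulr1.
have gx : forall x y, (G (x, y)).2 = c + B * x.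
  by move=> x y; rewrite rel1 /hinv /= fx.
have G0 : forall x y, G (x, y) = (c + B * y, c + B * x).
  by move=> x y; rewrite [LHS]surjective_pairing fx gx.
have i1 : c + B * c = 0.
  by have := congr1 fst (inv (0, 0)); rewrite !G0 /= !mulr0 !addr0.
have i2 : c + B * (c + B) = 1.
  by have := congr1 fst (inv (1, 0)); rewrite !G0 /= mulr1.
have B2 : B ^+ 2 = 1.
  by rewrite -i2 mulrDr addrA i1 add0r expr2.
have Bnz : B != 0 by apply/eqP => B0; move: B2; rewrite B0 expr0n /= => /eqP; rewrite eq_sym oner_eq0.
have e0 := rel2 (0, 0); have e1 := rel2 (1, 0).
rewrite /hf /= !G0 /= in e0 e1.
have d2 : d ^+ 2 = 1.
  have : B * (1 - d ^+ 2) = 0.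
    have h : B * (1 - d ^+ 2) =
       (d * (c + B * (p.[0] - d * 1)) + (c + B * 1)) - (d * (c + B * (p.[0] - d * 0)) + (c + B * 0)).
      by ring.
    by rewrite h -e0 -e1 subrr.
  by move/eqP; rewrite mulf_eq0 (negbTE Bnz) /= subr_eq0 => /eqP <-.
have : (d - 1) * (d + 1) = 0.
  by rewrite (_ : (d - 1) * (d + 1) = d ^+ 2 - 1); [rewrite d2 subrr | ring].
move/eqP; rewrite mulf_eq0 subr_eq0 addr_eq0 => /orP [/eqP d1|/eqP dm1]; first by left.
right; split => //.
have ey : forall y, p.[c + B * y] = - B * p.[y].
  move=> y; have := rel2 (0, y); rewrite /hf /= !G0 dm1 /= mulr0 subr0 mulr0 addr0.
  by move=> ->; ring.
have : (B - 1) * (B + 1) = 0.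
  by rewrite (_ : (B - 1) * (B + 1) = B ^+ 2 - 1); [rewrite B2 subrr | ring].
move/eqP; rewrite mulf_eq0 subr_eq0 addr_eq0 => /orP [/eqP B1|/eqP Bm1].
  have c0 : c = 0.
    move: i1; rewrite B1 mul1r => /eqP; rewrite -mulr2n mulrn_eq0 /= => /eqP //.
  have : p == 0.
    apply/eqP; apply: poly_inf_eq => y; rewrite horner0.
    have := ey y; rewrite c0 B1 add0r mul1r mulN1r => /eqP.
    rewrite -subr_eq0 opprK -mulr2n mulrn_eq0 /= => /eqP //.
  by rewrite -size_poly_eq0 => /eqP sp0; move: sp; rewrite sp0.
exists c => y; have := ey y; rewrite Bm1 !mulN1r opprK.
by rewrite mul1r.
Qed.

Lemma ex_min (P : nat -> Prop) : (exists n, P n) -> exists n, P n /\ forall m, P m -> (n <= m)%N.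
Proof.
move=> [n0 Pn0].
suff H : forall k n, (n <= k)%N -> P n -> exists n, P n /\ forall m, P m -> (n <= m)%N.
  exact: H (leqnn n0) Pn0.
elim=> [|k IH] n hn Pn.
  exists n; split => // m _; move: hn; rewrite leqn0 => /eqP ->; exact: leq0n.
case: (classic (exists m, (m < n)%N /\ P m)) => [[m [lt Pm]]|nex].
  by apply: (IH m) => //; move: lt hn; lia.
exists n; split => // m Pm; rewrite leqNgt; apply/negP => lt; apply: nex; by exists m.
Qed.

Lemma only_if : p`_(size p).-2 = 0 -> reversible_by_involution (henon p d) ->
  d = 1 \/ (d = -1 /\ is_even_poly p).
Proof.
move=> pl1 [R [[[P [Q HPQ]] _] [inv [h1 h2]]]].
have RR : Rev R.
  split => //.
  - move=> z; have := h1 (R z); rewrite inv -/(hf _) -/(hf _) => E.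
    by rewrite -E hinvK.
  - by exists P => x y; rewrite HPQ.
  - by exists Q => x y; rewrite HPQ.
have RP : Rep (fun z => (R z).1) P by move=> x y; rewrite HPQ.
have RQ : Rep (fun z => (R z).2) Q by move=> x y; rewrite HPQ.
have [n0 D0] := Rep_deg RP; have [e0 E0] := Rep_deg RQ.
pose Pm N := exists G n e, [/\ Rev G, IsDeg (fun z => (G z).1) n,
   IsDeg (fun z => (G z).2) e & (n + e)%N = N].
have [N [[G [n [e [RG Dn De NE]]]] Nmin]] := ex_min (ex_intro Pm _ (ex_intro _ R
   (ex_intro _ n0 (ex_intro _ e0 (And4 RR D0 E0 erefl))))).
have [n1 e1] : n = 1%N /\ e = 1%N.
  apply: (minimal_deg RG Dn De) => G' n' e' RG' Dn' De'.
  by rewrite NE; apply: Nmin; exists G', n', e'.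
subst n e.
case: (affine_concl RG Dn De) => [->|[dm1 [c Hc]]]; first by left.
right; split => //.
have c0 : c = 0 by apply: sym_center Hc.
by move=> y; rewrite -[RHS]Hc c0 sub0r.
Qed.

End Henon.

Lemma if_dir (p : {poly F}) (d : F) : d = 1 \/ (d = -1 /\ is_even_poly p) ->
  reversible_by_involution (henon p d).
Proof.
case => [->|[-> ev]].
  have PM : poly_map (fun z : F * F => (z.2, z.1)).
    by exists ('X%:P), 'X => x y; rewrite hornerC !hornerX hornerC.
  exists (fun z => (z.2, z.1)); split; first by split => //; exists (fun z => (z.2, z.1)); split => //; split; case.
  split; first by case.
  by split; case=> x y; rewrite /henon /=; congr (_, _); ring.
have PM : poly_map (fun z : F * F => (- z.2, - z.1)).
  by exists (- 'X%:P), (- 'X) => x y; rewrite !hornerN hornerC !hornerX hornerC.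
exists (fun z => (- z.2, - z.1)); split.
  by split => //; exists (fun z => (- z.2, - z.1)); split => //; split; case=> x y /=; rewrite !opprK.
split; first by case=> x y /=; rewrite !opprK.
split; case=> x y; rewrite /henon /=; congr (_, _); rewrite ?ev; ring.
Qed.

End Gen.

Theorem mainTheorem9 (R : realType) (p : {poly R[i]}) (delta : R[i]) :
  delta != 0 -> normal_henon_poly p ->
  (reversible_by_involution (henon p delta) <->
   (delta = 1 \/ (delta = -1 /\ is_even_poly p))).
Proof.
move=> dnz [sp [_ pl]]; split; first exact: only_if.
exact: if_dir.
Qed.
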